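(* For all $k\geq 1$ there is $N$ such that every irreducible graph $G=(V,E)$ with $|V|\geq N$ contains an element of $Irr(k)$ as an induced subgraph.
   Context: For a graph $G=(V,E)$ define $x\sim_G y$ if for all $z\in V\setminus\{x,y\}$, $xz\in E$ iff $yz\in E$; this is an equivalence relation. $G$ is irreducible if every $\sim_G$-class has size $1$. For $k\ge1$, $Irr(k)$ is the set of all graphs on the vertex set $\{a_1,\dots,a_k,b_1,\dots,b_k\}$ ($2k$ distinct vertices) such that one of the following holds: (i) for all $i,j\in[k]$, $a_ib_j\in E$ iff $i\le j$; (ii) for all $i,j\in[k]$, $a_ib_j\in E$ iff $i=j$; (iii) for all $i,j\in[k]$, $a_ib_j\in E$ iff $i\ne j$. (Edges among the $a_i$'s and among the $b_j$'s are unrestricted.) *)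

(* Defs.v *)
From mathcomp Require Import all_boot.
Set Implicit Arguments. Unset Strict Implicit. Unset Printing Implicit Defensive.

Definition simple_graph (T : finType) (e : rel T) : Prop :=
  symmetric e /\ irreflexive e.

Definition twin (T : finType) (e : rel T) (x y : T) : Prop :=
  forall z : T, z != x -> z != y -> e x z = e y z.

Definition irreducible_graph (T : finType) (e : rel T) : Prop :=
  forall x y : T, twin e x y -> x = y.

(* Vertex set {a_1..a_k, b_1..b_k}: a_i = inl i, b_j = inr j (0-based indices). *)
Definition irr_vertex (k : nat) : finType := ('I_k + 'I_k)%type.

Definition in_Irr (k : nat) (H : rel (irr_vertex k)) : Prop :=
  simple_graph H /\
  ((forall i j : 'I_k, H (inl i) (inr j) = (i <= j)%N) \/
   (forall i j : 'I_k, H (inl i) (inr j) = (i == j)) \/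
   (forall i j : 'I_k, H (inl i) (inr j) = (i != j))).

Definition induced_subgraph (S T : finType) (H : rel S) (e : rel T) : Prop :=
  exists f : S -> T, injective f /\ forall x y : S, H x y = e (f x) (f y).

Definition contains_Irr (k : nat) (T : finType) (e : rel T) : Prop :=
  exists H : rel (irr_vertex k), in_Irr H /\ induced_subgraph H e.

(* Main.v *)
Require Import Defs.
From mathcomp Require Import all_boot zify.
Set Implicit Arguments. Unset Strict Implicit. Unset Printing Implicit Defensive.

Section Tree.
Variables (T : finType) (e : rel T).
Hypothesis He : simple_graph e.
Hypothesis Hirr : irreducible_graph e.

Definition treeP (m : nat) (S : {set T}) (v x : nat -> T) (d : nat -> bool) (w : T) : Prop :=
  (forall i, i < m -> v i \in S) /\
  w \in S /\ (forall j, j < m -> e w (x j) = d j) /\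
  (forall i j, j < i -> i < m -> e (v i) (x j) = d j) /\
  (forall i, i < m -> e (v i) (x i) = ~~ d i) /\
  (forall i j, i < m -> j < m -> x i = x j -> i = j) /\
  (forall i j, i < m -> j < m -> v i = v j -> i = j) /\
  (forall i j, i < m -> j < m -> v i = x j -> i < j).

Lemma distinguish (u w : T) : u != w ->
  exists z, [/\ z != u, z != w & e u z != e w z].
Proof.
move=> uw.
case: (boolP [exists z, [&& z != u, z != w & e u z != e w z]]).
  by move=> /existsP [z /and3P [h1 h2 h3]]; exists z.
move=> /existsPn H; exfalso; move/eqP: uw; apply; apply: Hirr => z zu zw.
by move: (H z); rewrite zu zw /= negbK => /eqP.
Qed.

Lemma treeA (m : nat) : forall S : {set T}, 2 ^ m.+1 <= #|S| ->
  exists v x d w, treeP m S v x d w.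
Proof.
elim: m => [|m IH] S hS.
  have : 0 < #|S| by move: hS; rewrite expn1; lia.
  move=> /card_gt0P [w wS].
  exists (fun _ => w), (fun _ => w), (fun _ => false), w.
  by do !split => //.
have /card_gt1P [u [w0 [uS wS uw]]] : 1 < #|S|.
  by move: hS; rewrite !expnS; have := expn_gt0 2 m; lia.
have [z [zu zw ez]] := distinguish uw.
have [S' [d0 [v0 [hS' S'P v0S v0z ev0]]]] : exists (S' : {set T}) (d0 : bool) (v0 : T),
   [/\ 2 ^ m.+1 <= #|S'|, (forall y, y \in S' -> [/\ y \in S, y != z & e y z = d0]),
     v0 \in S, v0 != z & e v0 z = ~~ d0].
  pose S1 := (S :\ z) :&: [set y | e y z].
  pose S0 := (S :\ z) :\: [set y | e y z].
  have hc : #|S1| + #|S0| = #|S :\ z| by rewrite cardsID.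
  have hc2 := cardsD1 z S.
  have hv : exists b, [/\ (if b then u else w0) \in S, (if b then u else w0) != z &
                       e (if b then u else w0) z = true].
    case E: (e u z).
      by exists true; split => //; rewrite eq_sym.
    exists false; split => //; first by rewrite eq_sym.
    by move: ez; rewrite E; case: (e w0 z).
  have hv' : exists b, [/\ (if b then u else w0) \in S, (if b then u else w0) != z &
                       e (if b then u else w0) z = false].
    case E: (e u z).
      exists false; split => //; first by rewrite eq_sym.
      by move: ez; rewrite E; case: (e w0 z).
    by exists true; split => //; rewrite eq_sym.
  case: (leqP (2 ^ m.+1) #|S1|) => h1.
    have [b [h1' h2' h3']] := hv'.
    exists S1, true, (if b then u else w0); split => //.
      by move=> y; rewrite !inE => /andP [/andP [-> ->] ->].
  have [b [h1' h2' h3']] := hv.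
  exists S0, false, (if b then u else w0); split => //.
    move: hS; rewrite (expnS 2 m.+1); move: (z \in S) hc2 => [|] /=; lia.
  by move=> y; rewrite !inE => /andP [/negbTE -> /andP [-> ->]].
have [v' [x' [d' [w' [Pv [Pw [Pwx [Plow [Pdiag [Pxi [Pvi Pvx]]]]]]]]]]] := IH S' hS'.
pose v i := match i with 0 => v0 | i'.+1 => v' i' end.
pose x i := match i with 0 => z | i'.+1 => x' i' end.
pose d i := match i with 0 => d0 | i'.+1 => d' i' end.
have v0S' : v0 \notin S'.
  by apply/negP => /S'P [_ _]; rewrite ev0; apply: Bool.no_fixpoint_negb.
have zS' : z \notin S' by apply/negP => /S'P [_ /eqP].
have xz : forall j, j < m -> x' j != z.
  move=> j jm; apply/eqP => xjz.
  have [_ _ h1] := S'P _ (Pv j jm).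
  have [_ _ h2] := S'P _ Pw.
  move: (Pdiag j jm) (Pwx j jm); rewrite xjz h1 h2 => ->; by case: (d' j).
exists v, x, d, w'.
have [w'S _ _] := S'P _ Pw.
split.
  case=> [|i] //= im; by have [] := S'P _ (Pv i im).
split => //.
split.
  case=> [|j] //= jm; first by have [] := S'P _ Pw.
  exact: Pwx.
split.
  case=> [|i] [|j] //= ji im; first by have [] := S'P _ (Pv i im).
  exact: Plow.
split.
  case=> [|i] //= im; exact: Pdiag.
split.
  case=> [|i] [|j] //= im jm.
  - by move=> /esym /eqP; rewrite (negbTE (xz j jm)).
  - by move=> /eqP; rewrite (negbTE (xz i im)).
  by move=> /Pxi ->.
split.
  case=> [|i] [|j] //= im jm.
  - by move=> h; move: v0S'; rewrite h Pv.
  - by move=> h; move: v0S'; rewrite -h Pv.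
  by move=> /Pvi ->.
case=> [|i] [|j] //= im jm.
- by move=> /eqP; rewrite (negbTE v0z).
- by move=> h; move: zS'; rewrite -h Pv.
by move=> /Pvx; apply.
Qed.
End Tree.

Fixpoint gsz (n : nat) : nat := if n is n'.+1 then (gsz n').*2.+2 else 0.

Lemma count_le1 (A : eqType) (p : pred A) (s : seq A) :
  uniq s -> (forall a b, p a -> p b -> a = b) -> count p s <= 1.
Proof.
move=> us hp; elim: s us => [|a s IH] //= /andP [as_ us].
case pa: (p a) => /=; last exact: IH.
suff -> : count p s = 0 by [].
apply/eqP; rewrite -leqn0 leqNgt -has_count; apply/hasP => [[b bs pb]].
by move: as_; rewrite (hp _ _ pa pb) bs.
Qed.

Lemma half_count (A : Type) (p : pred A) (s : seq A) :
  exists b : bool, size s <= (count (fun x => p x == b) s).*2.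
Proof.
have h1 : count (fun x => p x == true) s = count p s by apply: eq_count => x /=; case: (p x).
have h2 : count (fun x => p x == false) s = count (predC p) s by apply: eq_count => x /=; case: (p x).
have := count_predC p s.
case: (leqP (size s) (count p s).*2) => h.
  by exists true; rewrite h1.
by exists false; rewrite h2; lia.
Qed.

Section Greedy.
Variables (col bad : nat -> nat -> bool).
Hypothesis hbad : forall i j1 j2, bad i j1 -> bad i j2 -> j1 = j2.

Definition grel (p q : nat * bool) :=
  [&& p.1 < q.1, col p.1 q.1 == p.2 & ~~ bad p.1 q.1].

Lemma greedy n : forall L : seq nat, sorted ltn L -> gsz n <= size L ->
  exists R : seq (nat * bool), size R = n /\ all (fun p => p.1 \in L) R /\ pairwise grel R.
Proof.
elim: n => [|n IH] L sL hL.
  by exists [::].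
case: L sL hL => [|i L'] //= sL hL.
have uL : uniq (i :: L') := @sorted_uniq _ _ ltn_trans ltnn (i :: L') sL.
have allL := order_path_min ltn_trans sL.
pose L'' := filter (predC (bad i)) L'.
have cb : count (bad i) L' <= 1.
  by apply: count_le1; [case/andP: uL | move=> a b; apply: hbad].
have sz'' : size L'' + count (bad i) L' = size L' by rewrite size_filter addnC count_predC.
have [c hc] := half_count (col i) L''.
pose Lc := filter (fun j => col i j == c) L''.
have sLc : sorted ltn Lc.
  apply: (subseq_sorted ltn_trans _ (path_sorted sL)).
  exact: subseq_trans (filter_subseq _ _) (filter_subseq _ _).
have hLc : gsz n <= size Lc by rewrite size_filter; lia.
have [R' [szR [allR pR]]] := IH Lc sLc hLc.
exists ((i, c) :: R'); split; first by rewrite /= szR.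
split.
  rewrite /= mem_head /=; apply/allP => p /(allP allR).
  by rewrite !mem_filter => /and3P [_ _ h]; rewrite inE h orbT.
rewrite pairwise_cons pR andbT; apply/allP => p /(allP allR).
rewrite !mem_filter /= => /and3P [/eqP hc' hb pL'].
by rewrite /grel /= hc' eqxx hb (allP allL _ pL').
Qed.
End Greedy.

Theorem theorem3p29 :
  forall k : nat, (1 <= k)%N ->
  exists N : nat,
    forall (T : finType) (e : rel T),
      simple_graph e -> irreducible_graph e -> (N <= #|T|)%N ->
      contains_Irr k e.
Proof.
move=> k _; exists (2 ^ (2 * gsz (2 * k.+1)).+1) => T e He Hirr hN.
set m := 2 * gsz (2 * k.+1).
have hS : 2 ^ m.+1 <= #|[set: T]| by rewrite cardsT.
have [v [x [d [w [Pv [_ [_ [Plow [Pdiag [Pxi [Pvi Pvx]]]]]]]]]]] :=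
  treeA Hirr hS.
have [D hD] := half_count d (iota 0 m).
pose L := filter (fun j => d j == D) (iota 0 m).
have sL : sorted ltn L := sorted_filter ltn_trans _ (iota_ltn_sorted 0 m).
have hL : gsz (2 * k.+1) <= size L by rewrite size_filter; move: hD; rewrite size_iota; lia.
pose bad i j := (j < m) && (v i == x j).
have hbad : forall i j1 j2, bad i j1 -> bad i j2 -> j1 = j2.
  move=> i j1 j2 /andP [h1 /eqP e1] /andP [h2 /eqP e2]; apply: Pxi => //; by rewrite -e1 -e2.
have [R [szR [allR pR]]] := @greedy (fun i j => e (v i) (x j)) bad hbad _ _ sL hL.
have [C hC] := half_count (fun p : nat * bool => p.2) R.
pose R2 := filter (fun p : nat * bool => p.2 == C) R.
have szR2 : k.+1 <= size R2 by rewrite size_filter; move: hC; rewrite szR; lia.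
have pR2 : pairwise (grel (fun i j => e (v i) (x j)) bad) R2 := pairwise_filter (fun p : nat * bool => p.2 == C) pR.
pose idx s := (nth (0, false) R2 s).1.
have Hin : forall s, s < k.+1 -> [/\ idx s < m, d (idx s) = D & (nth (0, false) R2 s).2 = C].
  move=> s hs; have : nth (0, false) R2 s \in R2 by apply: mem_nth; apply: leq_trans hs szR2.
  rewrite mem_filter => /andP [/eqP hc /(allP allR)].
  rewrite mem_filter mem_iota => /andP [/eqP hd /andP [_ hm]].
  by split => //; rewrite /idx; lia.
have Hlt : forall s t, s < t -> t < k.+1 ->
    [/\ idx s < idx t, e (v (idx s)) (x (idx t)) = C & ~~ bad (idx s) (idx t)].
  move=> s t st tk.
  have /(pairwiseP (0, false)) H := pR2.
  have ht2 : t < size R2 by apply: leq_trans tk szR2.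
  have hs2 : s < size R2 by apply: ltn_trans st ht2.
  have := H s t hs2 ht2 st.
  have [_ _ hc] := Hin s (ltn_trans st tk).
  rewrite /grel hc => /and3P [h1 /eqP h2 h3].
  by split.
have E : forall s t, s < k.+1 -> t < k.+1 ->
    e (v (idx s)) (x (idx t)) = if t < s then D else if s == t then ~~ D else C.
  move=> s t sk tk; case: (ltngtP s t) => h.
  - by have [_ -> _] := Hlt _ _ h tk.
  - have [h1 _ _] := Hlt _ _ h sk; have [hm _ _] := Hin _ sk; have [_ hd' _] := Hin _ tk.
    by rewrite Plow // hd'.
  - by rewrite h Pdiag; [have [_ -> _] := Hin _ tk | have [] := Hin _ tk].
have NE : forall s t, s < k.+1 -> t < k.+1 -> v (idx s) != x (idx t).
  move=> s t sk tk; apply/eqP => h.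
  have [ms _ _] := Hin _ sk; have [mt _ _] := Hin _ tk.
  have := Pvx _ _ ms mt h.
  case: (ltngtP s t) => st.
  - have [_ _ hb] := Hlt _ _ st tk; move: hb; rewrite /bad mt h eqxx //.
  - have [h1 _ _] := Hlt _ _ st sk; lia.
  - rewrite st; lia.
have IDX : forall s t, s < k.+1 -> t < k.+1 -> idx s = idx t -> s = t.
  move=> s t sk tk h; case: (ltngtP s t) => st //.
  - have [h1 _ _] := Hlt _ _ st tk; lia.
  - have [h1 _ _] := Hlt _ _ st sk; lia.
have Hsym : symmetric e by case: He.
have Hirf : irreflexive e by case: He.
pose f1 := fun u : irr_vertex k => match u with inl s => v (idx s) | inr t => x (idx t) end.
pose f2 := fun u : irr_vertex k => match u with inl s => x (idx s) | inr t => v (idx t.+1) end.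
have ltk : forall i : 'I_k, i < k.+1 by move=> i; have := ltn_ord i; lia.
have ltk1 : forall i : 'I_k, i.+1 < k.+1 by move=> i; have := ltn_ord i; lia.
have inj1 : injective f1.
  move=> [a|a] [b|b] /= h.
  - by congr inl; apply: val_inj; apply: IDX (ltk a) (ltk b) _; apply: Pvi h;
      [have [] := Hin _ (ltk a) | have [] := Hin _ (ltk b)].
  - by move: (NE _ _ (ltk a) (ltk b)); rewrite h eqxx.
  - by move: (NE _ _ (ltk b) (ltk a)); rewrite h eqxx.
  - by congr inr; apply: val_inj; apply: IDX (ltk a) (ltk b) _; apply: Pxi h;
      [have [] := Hin _ (ltk a) | have [] := Hin _ (ltk b)].
have inj2 : injective f2.
  move=> [a|a] [b|b] /= h.
  - by congr inl; apply: val_inj; apply: IDX (ltk a) (ltk b) _; apply: Pxi h;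
      [have [] := Hin _ (ltk a) | have [] := Hin _ (ltk b)].
  - by move: (NE _ _ (ltk1 b) (ltk a)); rewrite h eqxx.
  - by move: (NE _ _ (ltk1 a) (ltk b)); rewrite h eqxx.
  - congr inr; apply: val_inj.
    suff : a.+1 = b.+1 by case.
    by apply: IDX (ltk1 a) (ltk1 b) _; apply: Pvi h;
      [have [] := Hin _ (ltk1 a) | have [] := Hin _ (ltk1 b)].
have simp : forall f : irr_vertex k -> T, simple_graph (fun a b => e (f a) (f b)).
  by move=> f; split => [a b|a] /=; [apply: Hsym | apply: Hirf].
have oeq : forall i j : 'I_k, (i == j) = (val i == val j) by [].
have [Dv|Dv] : D = true \/ D = false by case: (D); [left|right].
all: have [Cv|Cv] : C = true \/ C = false by case: (C); [left|right].
2: { exists (fun a b => e (f2 a) (f2 b)); split; last by exists f2.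
  split; first exact: simp.
  left => i j /=; rewrite Hsym (E _ _ (ltk1 j) (ltk i)) Dv Cv.
  by case: ltngtP => //= h; lia. }
all: exists (fun a b => e (f1 a) (f1 b)); split; last by exists f1.
all: split; first exact: simp.
- by right; right => i j /=; rewrite (E _ _ (ltk i) (ltk j)) Dv Cv oeq; case: ltngtP.
- by left => i j /=; rewrite (E _ _ (ltk i) (ltk j)) Dv Cv; case: ltngtP => // h; lia.
- by right; left => i j /=; rewrite (E _ _ (ltk i) (ltk j)) Dv Cv oeq; case: ltngtP.
Qed.
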